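(* Let $G$ be a digraph and $f$ a discrete Morse function on $G$, and let $\gamma$ be an allowed elementary $n$-path in $G$. Then the following two conditions cannot both hold: (i'') there exists an allowed elementary $(n-1)$-path $\beta<\gamma$ with $f(\beta)=f(\gamma)$; (ii'') there exists an allowed elementary $(n+1)$-path $\alpha>\gamma$ with $f(\alpha)=f(\gamma)$.
   Context: A digraph $G=(V,E)$ consists of a set $V$ and $E\subseteq(V\times V)\setminus\{(v,v)\}$; $(u,v)\in E$ is written $u\to v$. An allowed elementary $n$-path is a sequence $v_0\cdots v_n$ of vertices with $v_{i-1}\to v_i\in E$ for $1\le i\le n$. For allowed elementary paths, $\gamma'<\gamma$ (or $\gamma>\gamma'$) means $\gamma'$ is obtained from $\gamma$ by deleting some entries. A map $f:V\to[0,+\infty)$ is a discrete Morse function on $G$ if for every allowed elementary path $v_0\cdots v_n$: (i) there is at most one index $i$ with $f(v_i)=0$ such that $v_0\cdots v_{i-1}v_{i+1}\cdots v_n$ is an allowed elementary $(n-1)$-path; (ii) there is at most one vertex $u$ with $f(u)=0$ such that for some $-1\le j\le n$ the sequence $v_0\cdots v_juv_{j+1}\cdots v_n$ (meaning $uv_0\cdots v_n$ if $j=-1$, $v_0\cdots v_nu$ if $j=n$) is an allowed elementary $(n+1)$-path. Set $f(v_0\cdots v_n)=\sum_if(v_i)$. *)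

(* Defs.v *)
From Stdlib Require Import Reals List Arith.
Import ListNotations.
Open Scope R_scope.

Section Digraph.
Variable V : Type.
Variable E : V -> V -> Prop.

Fixpoint chain (l : list V) : Prop :=
  match l with
  | x :: ((y :: _) as t) => E x y /\ chain t
  | _ => True
  end.

Definition allowed_path (n : nat) (l : list V) : Prop :=
  length l = S n /\ chain l.

(* gamma' < gamma : gamma' is obtained from gamma by deleting some entries *)
Inductive deleted_from : list V -> list V -> Prop :=
  | df_nil : deleted_from [] []
  | df_keep : forall x l l', deleted_from l' l -> deleted_from (x :: l') (x :: l)
  | df_drop : forall x l l', deleted_from l' l -> deleted_from l' (x :: l).

Definition remove_at (i : nat) (l : list V) : list V :=
  firstn i l ++ skipn (S i) l.

(* insertion of u at position j (0 <= j <= length l); j corresponds to the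
   paper's index j-1 in {-1,...,n} *)
Definition insert_at (j : nat) (u : V) (l : list V) : list V :=
  firstn j l ++ u :: skipn j l.

Variable f : V -> R.

Definition path_val (l : list V) : R := fold_right (fun v acc => f v + acc) 0 l.

Definition is_discrete_morse : Prop :=
  (forall v, 0 <= f v) /\
  forall (n : nat) (l : list V), allowed_path n l ->
    (forall i i' v v',
        nth_error l i = Some v -> f v = 0 ->
        (exists m, S m = n /\ allowed_path m (remove_at i l)) ->
        nth_error l i' = Some v' -> f v' = 0 ->
        (exists m, S m = n /\ allowed_path m (remove_at i' l)) ->
        i = i') /\
    (forall u u',
        f u = 0 -> (exists j, (j <= S n)%nat /\ allowed_path (S n) (insert_at j u l)) ->
        f u' = 0 -> (exists j, (j <= S n)%nat /\ allowed_path (S n) (insert_at j u' l)) ->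
        u = u').
End Digraph.

(* Main.v *)
Require Import Defs.
From Stdlib Require Import Reals List Arith Lia Lra.
Import ListNotations.
Open Scope R_scope.

Section S.
Variable V : Type.
Variable E : V -> V -> Prop.

Lemma chain_app (A B : list V) (x : V) :
  chain V E (A ++ x :: B) <-> chain V E (A ++ [x]) /\ chain V E (x :: B).
Proof.
  induction A as [|a A IH]; simpl.
  - destruct B; simpl; tauto.
  - destruct A as [|a' A']; simpl in *.
    + destruct B; simpl; tauto.
    + rewrite IH. tauto.
Qed.

Lemma df_len (a b : list V) : deleted_from V a b -> (length a <= length b)%nat.
Proof. induction 1; simpl; lia. Qed.

Lemma df_eq (a b : list V) : deleted_from V a b -> length a = length b -> a = b.
Proof.
  induction 1; simpl; intros Hl.
  - reflexivity.
  - f_equal; auto.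
  - apply df_len in H. lia.
Qed.

Lemma df_one (a b : list V) : deleted_from V a b -> length b = S (length a) ->
  exists L x R, b = L ++ x :: R /\ a = L ++ R.
Proof.
  induction 1; simpl; intros Hl.
  - discriminate.
  - destruct IHdeleted_from as (L & y & R & -> & ->); [lia|].
    exists (x :: L), y, R. auto.
  - exists [], x, l. simpl. split; auto. apply df_eq; auto. lia.
Qed.

Lemma remove_at_app (A B : list V) x : remove_at V (length A) (A ++ x :: B) = A ++ B.
Proof. unfold remove_at. induction A; simpl; auto. f_equal; auto. Qed.

Lemma nth_app (A B : list V) x : nth_error (A ++ x :: B) (length A) = Some x.
Proof. induction A; simpl; auto. Qed.

Variable f : V -> R.
Lemma pv_app (A B : list V) x : path_val V f (A ++ x :: B) = path_val V f (A ++ B) + f x.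
Proof. induction A; simpl; [lra|]. rewrite IHA. lra. Qed.

Hypothesis Hf : is_discrete_morse V E f.

Lemma lemA P x Q y Z : chain V E (P ++ x :: Q ++ y :: Z) -> f x = 0 -> f y = 0 ->
  chain V E (P ++ Q ++ y :: Z) -> chain V E (P ++ x :: Q ++ Z) -> False.
Proof.
  intros H0 Hx Hy H1 H2.
  destruct Hf as [_ Hm].
  set (l := P ++ x :: Q ++ y :: Z).
  assert (Hl : length l = S (S (length P + length Q + length Z))).
  { unfold l. simpl; rewrite ?length_app; simpl; rewrite ?length_app; simpl; rewrite ?length_app; lia. }
  assert (Al : allowed_path V E (S (length P + length Q + length Z)) l) by (split; auto).
  destruct (Hm _ _ Al) as [Hi _].
  assert (E2 : l = (P ++ x :: Q) ++ y :: Z) by (unfold l; rewrite <- app_assoc; reflexivity).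
  assert (Hne : length P <> length (P ++ x :: Q)) by (rewrite length_app; simpl; lia).
  apply Hne. apply (Hi _ _ x y).
  - apply nth_app.
  - exact Hx.
  - exists (length P + length Q + length Z)%nat. split; auto.
    unfold l. rewrite remove_at_app. split; auto.
    simpl; rewrite ?length_app; simpl; rewrite ?length_app; simpl; rewrite ?length_app; lia.
  - rewrite E2. apply nth_app.
  - exact Hy.
  - exists (length P + length Q + length Z)%nat. split; auto.
    rewrite E2, remove_at_app. rewrite <- app_assoc. simpl. split; auto.
    simpl; rewrite ?length_app; simpl; rewrite ?length_app; simpl; rewrite ?length_app; lia.
Qed.

Lemma chain_infix A B C : chain V E (A ++ B ++ C) -> chain V E B.
Proof.
  induction A as [|a A IH]; simpl.
  - induction B as [|b B IHB]; simpl; auto.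
    destruct B; simpl; auto; intuition.
  - intros H. apply IH. destruct (A ++ B ++ C); simpl in *; intuition.
Qed.

Lemma adj_uv P u v Z : chain V E (P ++ u :: v :: Z) -> chain V E (P ++ v :: Z) ->
  f u = 0 -> f v = 0 -> False.
Proof.
  intros H1 H2 Hu Hv.
  destruct (rev P) as [|l P0] eqn:HP.
  - assert (P = []) by (destruct P; auto; simpl in HP; destruct (rev P); discriminate).
    subst. apply (lemA [] u [] v [] ); simpl; auto.
    simpl in H1; tauto.
  - assert (P = rev P0 ++ [l]) by (rewrite <- (rev_involutive P), HP; reflexivity). subst P.
    rewrite <- app_assoc in H1, H2. simpl in H1, H2.
    apply (lemA [l] u [] v []); simpl; auto; simpl in H1, H2.
    + apply chain_app in H1. simpl in H1. tauto.
    + apply chain_app in H2. simpl in H2. tauto.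
    + apply chain_app in H1. simpl in H1. tauto.
Qed.
Lemma adj_vu P u v Z : chain V E (P ++ v :: u :: Z) -> chain V E (P ++ v :: Z) ->
  f u = 0 -> f v = 0 -> False.
Proof.
  intros H1 H2 Hu Hv.
  apply chain_app in H1. apply chain_app in H2.
  destruct H1 as [_ H1]. destruct H2 as [_ H2].
  destruct Z as [|z Z].
  - apply (lemA [] v [] u []); simpl in *; tauto.
  - apply (lemA [] v [] u [z]); simpl in *; tauto.
Qed.

Lemma main n gamma : allowed_path V E n gamma ->
  (exists beta, (exists m, Datatypes.S m = n /\ allowed_path V E m beta) /\
        deleted_from V beta gamma /\ path_val V f beta = path_val V f gamma) ->
  (exists alpha, allowed_path V E (Datatypes.S n) alpha /\
        deleted_from V gamma alpha /\ path_val V f alpha = path_val V f gamma) -> False.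
Proof.
  intros [Hgl Hgc] [beta [[m [Hm [Hbl Hbc]]] [Hbd Hbv]]] [alpha [[Hal Hac] [Had Hav]]].
  destruct (df_one _ _ Hbd) as (L & v & R & Eg & Eb); [lia|].
  destruct (df_one _ _ Had) as (L' & u & R' & Ea & Eg'); [lia|].
  assert (Hfv : f v = 0).
  { subst. rewrite pv_app in Hbv. lra. }
  assert (Hfu : f u = 0).
  { rewrite Ea, pv_app, <- Eg' in Hav. lra. }
  subst alpha beta.
  rewrite Eg in Eg'. subst gamma.
  destruct (app_eq_app _ _ _ _ Eg') as [M [[HL HR] | [HL HR]]].
  - subst L R'.
    destruct M as [|m0 M].
    + simpl in *. rewrite app_nil_r in *. eapply adj_uv; eauto. 
    + apply (lemA L' u (m0 :: M) v R); auto.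
      * rewrite <- app_assoc in Hgc. exact Hgc.
      * apply chain_app. split.
        -- apply chain_app in Hac. tauto.
        -- apply chain_app in Hac. destruct Hac as [_ Hac]. simpl in Hac.
           rewrite <- app_assoc in Hbc. simpl in Hbc. apply chain_app in Hbc.
           simpl. destruct Hac. split; [auto|]. tauto.
  - subst L'.
    destruct M as [|m0 M].
    + simpl in HR. subst R'. rewrite app_nil_r in *. eapply adj_uv; eauto.
    + injection HR as <- HR. subst R.
      destruct M as [|m1 M] using rev_ind.
      * simpl in *. rewrite <- app_assoc in Hac. simpl in Hac. eapply adj_vu; eauto.
      * clear IHM.
        apply (lemA L v (M ++ [m1]) u R'); auto.
        -- rewrite <- app_assoc in Hac. simpl in Hac. exact Hac.
        -- rewrite <- app_assoc in Hac. simpl in Hac.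
           rewrite <- !app_assoc in Hac, Hbc |- *. simpl in *.
           rewrite app_assoc in Hbc |- *.
           rewrite app_comm_cons, app_assoc in Hac.
           apply chain_app in Hac. apply chain_app in Hbc.
           apply chain_app. tauto.
Qed.
End S.

Theorem lemma4p4 (V : Type) (E : V -> V -> Prop)
  (E_irrefl : forall v, ~ E v v) (f : V -> R)
  (Hf : is_discrete_morse V E f)
  (n : nat) (gamma : list V) (Hgamma : allowed_path V E n gamma) :
  ~ ((exists beta, (exists m, S m = n /\ allowed_path V E m beta) /\
        deleted_from V beta gamma /\ path_val V f beta = path_val V f gamma) /\
     (exists alpha, allowed_path V E (S n) alpha /\
        deleted_from V gamma alpha /\ path_val V f alpha = path_val V f gamma)).
Proof.
  intros [H1 H2]. exact (main V E f Hf n gamma Hgamma H1 H2).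
Qed.
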